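(* Let $n\ge 1$. Every game of Planted Brussels Sprouts of order $n$ ends after exactly $n-1$ moves, no matter how the moves are chosen.
   Context: Planted Brussels Sprouts of order $n$: start with a closed disk with $n$ marked points on its boundary circle, labeled $1,\dots,n$ in clockwise order. Attached to each marked point is an arm, a short segment pointing into the interior of the disk; these arms are free. A move consists of two steps. First, choose two free arms and join their free ends by a simple curve (an arc) in the disk that does not intersect any previously drawn arc or arm; the two joined arms cease to be free. Second, mark a point (a notch) on the new arc, from which two new free arms emanate, one on each side of the arc. The game ends when no move is possible. *)

(* Defs.v *)
From mathcomp Require Import all_boot.
Set Implicit Arguments. Unset Strict Implicit. Unset Printing Implicit Defensive.

(* A free arm: either the arm at boundary marked point [i], or one of the two
   arms (side = false / true) emanating from the notch of the [k]-th move. *)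
Inductive arm : Type :=
| BArm (i : nat)
| NArm (k : nat) (side : bool).

(* A face (region of the disk cut out by the drawn arcs) is a topological disk;
   it is recorded by the cyclic (clockwise) sequence of the free arms pointing
   into it. *)
Definition face := seq arm.
Definition position := seq face.

Definition init_position (n : nat) : position := [:: [seq BArm i | i <- iota 1 n]].

(* Joining the arms at positions i < j of face f by an arc splits the face into
   two faces: the one containing the arms strictly between them (plus one new
   notch arm), and the one containing the remaining arms (plus the other new
   notch arm).  The notch arms sit where the arc lies in the cyclic order. *)
Definition face_in (f : face) (i j : nat) (x : arm) : face :=
  drop i.+1 (take j f) ++ [:: x].
Definition face_out (f : face) (i j : nat) (y : arm) : face :=
  drop j.+1 f ++ take i f ++ [:: y].

Inductive move (k : nat) : position -> position -> Prop :=
| Move (s1 s2 : position) (f : face) (i j : nat) :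
    i < j -> j < size f ->
    move k (s1 ++ f :: s2)
           (s1 ++ face_in f i j (NArm k false) :: face_out f i j (NArm k true) :: s2).

Definition terminal (p : position) : Prop := forall k q, ~ move k p q.

Definition is_play (n m : nat) (p : nat -> position) : Prop :=
  p 0 = init_position n /\ forall t, t < m -> move t (p t) (p t.+1).

(* Main.v *)
Require Import Defs.
From mathcomp Require Import all_boot.
From mathcomp Require Import zify.

Definition szs (P : position) := sumn [seq size f | f <- P].

Lemma szs_cat P Q : szs (P ++ Q) = szs P + szs Q.
Proof. by rewrite /szs map_cat sumn_cat. Qed.

Lemma move_inv k P Q : move k P Q ->
  size Q = (size P).+1 /\ szs Q = szs P /\
  (all (fun f => 0 < size f) P -> all (fun f => 0 < size f) Q).
Proof.
case=> s1 s2 f i j lij ljs.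
have Hin : size (face_in f i j (NArm k false)) = j - i.+1 + 1.
  rewrite /face_in size_cat size_drop size_take /=.
  by rewrite (_ : (if j < size f then j else size f) = j) //; rewrite ljs.
have Hout : size (face_out f i j (NArm k true)) = size f - j.+1 + i + 1.
  rewrite /face_out !size_cat size_drop size_take /=.
  have -> : i < size f by lia.
  lia.
split; first by rewrite !size_cat /=; lia.
split.
  rewrite !szs_cat /szs /= -/(szs s2) Hin Hout; lia.
rewrite !all_cat /= => /and3P [-> _ ->] /=.
rewrite Hin Hout; lia.
Qed.

Lemma term_small s1 P : (forall k q, ~ move k (s1 ++ P) q) ->
  all (fun f : face => size f <= 1) P.
Proof.
elim: P s1 => //= f P IH s1 H; apply/andP; split.
  case: (leqP (size f) 1) => // hs; exfalso.
  apply: (H 0 (s1 ++ face_in f 0 1 (NArm 0 false) :: face_out f 0 1 (NArm 0 true) :: P)).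
  by apply: Move.
apply: (IH (rcons s1 f)); by rewrite cat_rcons.
Qed.

Theorem mainTheorem1 (n : nat) (hn : 1 <= n) (m : nat) (p : nat -> position) :
  is_play n m p -> m <= n - 1 /\ (terminal (p m) -> m = n - 1).
Proof.
move=> [p0 Hp].
have inv : forall t, t <= m ->
  size (p t) = t.+1 /\ szs (p t) = n /\ all (fun f => 0 < size f) (p t).
  elim=> [|t IH] Ht.
    rewrite p0 /init_position /szs /= size_map size_iota; split=> //; split; lia.
  have [H1 [H2 H3]] := IH (ltnW Ht).
  have [E1 [E2 E3]] := move_inv _ _ _ (Hp t Ht).
  by rewrite E1 E2 H1 H2; split=> //; split=> //; apply: E3.
have [H1 [H2 H3]] := inv m (leqnn m).
have key : forall P : position, all (fun f => 0 < size f) P -> size P <= szs P.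
  elim=> [|f P IHP] //= /andP [hf hP]; rewrite /szs /= -/(szs P).
  have := IHP hP; lia.
split.
  have := key _ H3; rewrite H1 H2; lia.
move=> Hterm.
have all1 : all (fun f => size f == 1) (p m).
  have := term_small [::] (p m) Hterm.
  elim: (p m) H3 => [|f P IHP] //= /andP [hf hP] /andP [hf' hP'].
  rewrite IHP // andbT; apply/eqP; lia.
have : szs (p m) = size (p m).
  move: all1; elim: (p m) => [|f P IHP] //= /andP [/eqP hf hP].
  by rewrite /szs /= -/(szs P) hf IHP.
rewrite H1 H2; lia.
Qed.
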